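(* For $x\in(0,1)$ let $I(x,1)=\exp\!\big(\frac{x\ln x}{x-1}-1\big)$ and $A_p(x,1)=\big(\frac{x^p+1}{2}\big)^{1/p}$ for $p\ne0$, $A_0(x,1)=\sqrt{x}$. For $p\in(0,2/3]$ and all $x\in(0,1)$, $$A_p(x,1)<I(x,1)<A_p(x,1)^{p/\ln2}<e^{-1}2^{1/p}A_p(x,1),$$ and the coefficients $1$ and $e^{-1}2^{1/p}$ are best possible, i.e. $1$ is the largest $c$ and $e^{-1}2^{1/p}$ is the smallest $C$ such that $cA_p(x,1)\le I(x,1)\le CA_p(x,1)$ for all $x\in(0,1)$. For $p\ge1$ all three inequalities are reversed. Moreover, for each fixed $x\in(0,1)$, $p\mapsto A_p(x,1)$ is increasing on $\mathbb R$, $p\mapsto A_p(x,1)^{p/\ln2}$ is decreasing on $\mathbb R$, and $p\mapsto e^{-1}2^{1/p}A_p(x,1)$ is decreasing on $(0,\infty)$.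
   Context: $I$ is the identric mean and $A_p$ the power mean, evaluated at $(x,1)$. *)

(* Defs.v *)
From Stdlib Require Import Reals.
Open Scope R_scope.

Definition identric1 (x : R) : R := exp (x * ln x / (x - 1) - 1).

Definition powmean1 (p x : R) : R :=
  if Req_EM_T p 0 then sqrt x
  else Rpower ((Rpower x p + 1) / 2) (1 / p).

Definition powmean1_pow (p x : R) : R := Rpower (powmean1 p x) (p / ln 2).

Definition upper_bound1 (p x : R) : R := exp (-1) * Rpower 2 (1 / p) * powmean1 p x.

(* Main.v *)
Require Import Defs.
From Stdlib Require Import Reals Lra Psatz.
From Coquelicot Require Import Coquelicot.
Open Scope R_scope.

Lemma incr (f d : R -> R) a b : a < b ->
  (forall t, a <= t <= b -> is_derive f t (d t)) ->
  (forall t, a < t < b -> 0 < d t) -> f a < f b.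
Proof.
intros Hab Hd Hp.
destruct (MVT_cor2 f d a b Hab) as [c [Hc1 Hc2]].
- intros c Hc. apply is_derive_Reals. apply Hd. exact Hc.
- assert (0 < d c) by (apply Hp; exact Hc2). nra.
Qed.

Lemma L2 (f d : R -> R) a b : a < b -> f a = 0 -> f b = 0 ->
  (forall t, a <= t <= b -> is_derive f t (d t)) ->
  (forall t1 t2, a < t1 -> t1 < t2 -> t2 < b -> 0 <= d t1 -> 0 < d t2) ->
  forall x, a < x < b -> f x < 0.
Proof.
intros Hab Ha Hb Hd Hs x Hx.
destruct (MVT_cor2 f d a x (proj1 Hx)) as [c1 [Hc1 Hc1']].
- intros c Hc. apply is_derive_Reals. apply Hd. lra.
- destruct (MVT_cor2 f d x b (proj2 Hx)) as [c2 [Hc2 Hc2']].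
  + intros c Hc. apply is_derive_Reals. apply Hd. lra.
  + destruct (Rle_lt_dec 0 (d c1)) as [H|H].
    * assert (0 < d c2) by (apply (Hs c1 c2); lra). nra.
    * nra.
Qed.

Lemma exp_mul_nat n y : exp (INR n * y) = exp y ^ n.
Proof.
induction n as [|n IH].
- simpl. rewrite Rmult_0_l. apply exp_0.
- rewrite S_INR. replace ((INR n + 1) * y) with (INR n * y + y) by ring.
  rewrite exp_plus, IH. simpl. ring.
Qed.

Lemma ln2_gt : 2/3 < ln 2.
Proof.
assert (H1 : exp (1/15) <= 15/14).
{ assert (H := exp_ineq1_le (-(1/15))).
  assert (E : exp (1/15) * exp (-(1/15)) = 1) by (rewrite <- exp_plus; replace (1/15 + - (1/15)) with 0 by ring; apply exp_0).
  assert (0 < exp (1/15)) by apply exp_pos. nra. }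
assert (H2 : exp (2/3) < 2).
{ replace (2/3) with (INR 10 * (1/15)) by (simpl; field).
  rewrite exp_mul_nat.
  assert (exp (1/15) ^ 10 <= (15/14)^10).
  { apply pow_incr. split; [left; apply exp_pos | exact H1]. }
  assert ((15/14)^10 < 2) by (simpl; lra). lra. }
rewrite <- (ln_exp (2/3)). apply ln_increasing. apply exp_pos. exact H2.
Qed.

Lemma ln2_lt1 : ln 2 < 1.
Proof.
rewrite <- (ln_exp 1). apply ln_increasing. lra.
assert (H := exp_ineq1 1). lra.
Qed.

Ltac side := repeat split; try (apply Rgt_not_eq; repeat apply Rmult_lt_0_compat; lra); try (intro; nra); try nra.

Definition VA s := s^3 - 1 - 3/2 * ln((1+s^2)/2) - (s^5 - s^2)/(1+s^2).

Lemma VA_pos s : 0 < s < 1 -> 0 < VA s.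
Proof.
intros Hs.
assert (H := incr (fun t => - VA t) (fun t => t*(1-t)^3/(1+t^2)^2) s 1 (proj2 Hs)).
assert (E : VA 1 = 0). { unfold VA. replace ((1+1^2)/2) with 1 by field. rewrite ln_1. field. }
cut (- VA s < - VA 1). lra.
apply H.
- intros t Ht. unfold VA. auto_derive.
  + side.
  + unfold Rdiv; cbn [pow]; field; side.
- intros t Ht. apply Rdiv_lt_0_compat.
  + apply Rmult_lt_0_compat; [lra|]. apply pow_lt. lra.
  + apply pow_lt. nra.
Qed.

Definition hA s := 3*ln s - (1 - 1/s^3)*(1 + 3/2*ln((1+s^2)/2)).

Lemma hA_neg s : 0 < s < 1 -> hA s < 0.
Proof.
intros Hs.
assert (E : hA 1 = 0). { unfold hA. replace ((1+1^2)/2) with 1 by field. rewrite ln_1. field. }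
rewrite <- E.
apply (incr hA (fun t => 3 * VA t / t^4)).
- lra.
- intros t Ht. unfold hA, VA. auto_derive.
  + side.
  + unfold Rdiv; cbn [pow]; field. side.
- intros t Ht. apply Rdiv_lt_0_compat.
  + assert (0 < VA t) by (apply VA_pos; lra). lra.
  + apply pow_lt. lra.
Qed.

Definition WB s := 3*ln 2*s - 2/(1+s^2) + 2/3*(2 - 5*s^3 - 3*s^5)/(1+s^2)^2.

Lemma WB_incr t1 t2 : 0 <= t1 -> t1 < t2 -> t2 <= 1 -> WB t1 < WB t2.
Proof.
intros H1 H2 H3.
apply (incr WB (fun s => 3*ln 2 - 2 + (1-s)^2*(-2*s^2+8*s+6)/(3*(1+s^2)^3))).
- lra.
- intros t Ht. unfold WB. auto_derive.
  + side.
  + unfold Rdiv; cbn [pow]; field; side.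
- intros t Ht. assert (H := ln2_gt).
  assert (0 <= (1-t)^2*(-2*t^2+8*t+6)/(3*(1+t^2)^3)).
  { apply Rdiv_le_0_compat.
    - apply Rmult_le_pos. apply pow2_ge_0. nra.
    - apply Rmult_lt_0_compat. lra. apply pow_lt. nra. }
  lra.
Qed.

Definition PB s := ln 2*s^3 - ln(1+s^2) + 2/3*(s^2 - s^5)/(1+s^2).

Lemma PB_neg s : 0 < s < 1 -> PB s < 0.
Proof.
intros Hs.
apply (L2 PB (fun t => t * WB t) 0 1).
- lra.
- unfold PB. replace (1+0^2) with 1 by ring. rewrite ln_1. field.
- unfold PB. replace (1+1^2) with 2 by ring. field.
- intros t Ht. unfold PB, WB. auto_derive.
  + side.
  + unfold Rdiv; cbn [pow]; field; side.
- intros a b Ha Hab Hb Hd.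
  assert (0 <= WB a). { destruct (Rle_lt_dec 0 (WB a)); [auto|nra]. }
  assert (WB a < WB b) by (apply WB_incr; lra).
  nra.
- exact Hs.
Qed.

Definition hB s := (1/s^3 - 1)*ln(1+s^2) + 3*ln 2*ln s.

Lemma hB_pos s : 0 < s < 1 -> 0 < hB s.
Proof.
intros Hs.
assert (E : hB 1 = 0). { unfold hB. rewrite ln_1. field. }
cut (- hB s < - hB 1). lra.
apply (incr (fun t => - hB t) (fun t => - (3 * PB t / t^4))).
- lra.
- intros t Ht. unfold hB, PB. auto_derive.
  + side.
  + unfold Rdiv; cbn [pow]; field. side.
- intros t Ht.
  assert (PB t < 0) by (apply PB_neg; lra).
  assert (0 < t^4) by (apply pow_lt; lra).
  assert (3 * PB t / t^4 < 0). { unfold Rdiv. assert (0 < / t^4) by (apply Rinv_0_lt_compat; lra). nra. }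
  lra.
Qed.

Definition SC x := x - 1 - ln((1+x)/2) - x*(x-1)/(1+x).

Lemma SC_neg x : 0 < x < 1 -> SC x < 0.
Proof.
intros Hx.
assert (E : SC 1 = 0). { unfold SC. replace ((1+1)/2) with 1 by field. rewrite ln_1. field. }
rewrite <- E.
apply (incr SC (fun t => (1-t)/(1+t)^2)).
- lra.
- intros t Ht. unfold SC. auto_derive.
  + side.
  + unfold Rdiv; cbn [pow]; field; side.
- intros t Ht. apply Rdiv_lt_0_compat. lra. apply pow_lt. lra.
Qed.

Definition kC x := ln x - (1 - 1/x)*(1 + ln((1+x)/2)).

Lemma kC_pos x : 0 < x < 1 -> 0 < kC x.
Proof.
intros Hx.
assert (E : kC 1 = 0). { unfold kC. rewrite ln_1. field. }
cut (- kC x < - kC 1). lra.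
apply (incr (fun t => - kC t) (fun t => - (SC t / t^2))).
- lra.
- intros t Ht. unfold kC, SC. auto_derive.
  + repeat split; lra.
  + unfold Rdiv; cbn [pow]; field; side.
- intros t Ht.
  assert (SC t < 0) by (apply SC_neg; lra).
  assert (SC t / t^2 < 0). { unfold Rdiv. assert (0 < / t^2) by (apply Rinv_0_lt_compat; apply pow_lt; lra). nra. }
  lra.
Qed.

Definition DQ x := -ln 2 + 1/(1+x) - (1-2*x-x^2)/(1+x)^2.

Lemma DQ_incr t1 t2 : 0 <= t1 -> t1 < t2 -> t2 <= 1 -> DQ t1 < DQ t2.
Proof.
intros H1 H2 H3.
apply (incr DQ (fun s => (3-s)/(1+s)^3)).
- lra.
- intros t Ht. unfold DQ. auto_derive.
  + side.
  + unfold Rdiv; cbn [pow]; field; side.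
- intros t Ht. apply Rdiv_lt_0_compat. lra. apply pow_lt. lra.
Qed.

Definition QD x := -ln 2*x + ln(1+x) - x*(1-x)/(1+x).

Lemma QD_neg x : 0 < x < 1 -> QD x < 0.
Proof.
intros Hx.
apply (L2 QD DQ 0 1).
- lra.
- unfold QD. replace (1+0) with 1 by ring. rewrite ln_1. field.
- unfold QD. replace (1+1) with 2 by ring. field.
- intros t Ht. unfold QD, DQ. auto_derive.
  + side.
  + unfold Rdiv; cbn [pow]; field; side.
- intros a b Ha Hab Hb Hd.
  assert (DQ a < DQ b) by (apply DQ_incr; lra). lra.
- exact Hx.
Qed.

Definition kD x := -ln 2*ln x - (1-x)*ln(1+x)/x.

Lemma kD_pos x : 0 < x < 1 -> 0 < kD x.
Proof.
intros Hx.
assert (E : kD 1 = 0). { unfold kD. rewrite ln_1. field. }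
cut (- kD x < - kD 1). lra.
apply (incr (fun t => - kD t) (fun t => - (QD t / t^2))).
- lra.
- intros t Ht. unfold kD, QD. auto_derive.
  + repeat split; lra.
  + unfold Rdiv; cbn [pow]; field; side.
- intros t Ht.
  assert (QD t < 0) by (apply QD_neg; lra).
  assert (QD t / t^2 < 0). { unfold Rdiv. assert (0 < / t^2) by (apply Rinv_0_lt_compat; apply pow_lt; lra). nra. }
  lra.
Qed.

Lemma sq_pos a : a <> 1 -> 0 < (a - 1) * (a - 1).
Proof. intros H. destruct (Rle_lt_dec a 1); [assert (a < 1) by lra|]; nra. Qed.

Lemma amgm t : t <> 0 -> t/2 < ln ((exp t + 1)/2).
Proof.
intros Ht.
assert (E : exp t = exp (t/2) * exp (t/2)) by (rewrite <- exp_plus; f_equal; field).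
assert (N : exp (t/2) <> 1).
{ intro H. apply Ht. assert (t/2 = 0). { rewrite <- ln_1, <- H, ln_exp. reflexivity. } lra. }
assert (P := sq_pos _ N).
rewrite <- (ln_exp (t/2)) at 1. apply ln_increasing. apply exp_pos. lra.
Qed.

Lemma bern r L : 1 < r -> L <> 0 -> 1 + r*(exp L - 1) < exp (r*L).
Proof.
intros Hr HL.
assert (H1 : 1 + (r-1)*L < exp ((r-1)*L)). { apply exp_ineq1. intro H. apply HL. nra. }
assert (H2 : 1 + - L < exp (- L)). { apply exp_ineq1. lra. }
assert (E1 : exp (r*L) = exp L * exp ((r-1)*L)) by (rewrite <- exp_plus; f_equal; ring).
assert (E2 : 1 = exp L * exp (- L)) by (rewrite <- exp_plus; replace (L + - L) with 0 by ring; rewrite exp_0; auto).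
assert (P : 0 < exp L) by apply exp_pos.
assert (H3 : exp L * (1 + (r-1)*L) < exp L * exp ((r-1)*L)) by (apply Rmult_lt_compat_l; auto).
assert (H4 : exp L * (1 + - L) < exp L * exp (- L)) by (apply Rmult_lt_compat_l; auto).
assert (H5 : (r - 1) * (exp L * (1 + - L)) < (r-1) * (exp L * exp (- L))) by (apply Rmult_lt_compat_l; lra).
rewrite <- E2 in H5. rewrite <- E1 in H3.
nra.
Qed.

Lemma jensen r u : 1 < r -> 0 < u -> u <> 1 -> r * ln ((u+1)/2) < ln ((exp (r * ln u) + 1)/2).
Proof.
intros Hr Hu Hu1.
set (m := (u+1)/2).
assert (Hm : 0 < m) by (unfold m; lra).
assert (Hum : u <> m) by (unfold m; intro; apply Hu1; lra).
assert (Hm1 : m <> 1) by (unfold m; intro; apply Hu1; lra).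
assert (N1 : ln u - ln m <> 0).
{ intro H. apply Hum. apply ln_inv; auto. lra. }
assert (N2 : - ln m <> 0).
{ intro H. apply Hm1. apply ln_inv; auto. lra. rewrite ln_1. lra. }
assert (B1 := bern r _ Hr N1).
assert (B2 := bern r _ Hr N2).
assert (X1 : exp (ln u - ln m) = u / m).
{ unfold Rminus. rewrite exp_plus, exp_Ropp, !exp_ln; auto. }
assert (X2 : exp (- ln m) = / m) by (rewrite exp_Ropp, exp_ln; auto).
assert (X3 : exp (r * (ln u - ln m)) = exp (r * ln u) * exp (- (r * ln m)))
  by (rewrite <- exp_plus; f_equal; ring).
assert (X4 : exp (r * - ln m) = exp (- (r * ln m))) by (f_equal; ring).
assert (X5 : exp (r * ln m) * exp (- (r * ln m)) = 1)
  by (rewrite <- exp_plus; replace (r * ln m + - (r * ln m)) with 0 by ring; apply exp_0).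
rewrite X1, X3 in B1. rewrite X2, X4 in B2.
set (E := exp (r * ln u)) in *. set (G := exp (- (r * ln m))) in *.
set (F := exp (r * ln m)) in *.
assert (S : u / m + / m = 2) by (unfold m; field; lra).
assert (0 < F) by apply exp_pos.
assert (0 < G) by apply exp_pos.
assert (Hk : 2 < (E + 1) * G) by nra.
assert (F < (E + 1)/2) by nra.
rewrite <- (ln_exp (r * ln m)). apply ln_increasing; auto.
Qed.

Lemma superadd r u : 1 < r -> 0 < u < 1 -> exp (r * ln u) + 1 < exp (r * ln (1+u)).
Proof.
intros Hr Hu.
assert (N : ln (1+u) <> 0). { apply ln_neq_0; lra. }
assert (B := bern r _ Hr N). rewrite exp_ln in B by lra.
assert (ln u < 0). { rewrite <- ln_1. apply ln_increasing; lra. }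
assert (exp (r * ln u) < exp (ln u)) by (apply exp_increasing; nra).
rewrite exp_ln in H0 by lra. nra.
Qed.

Definition lnI x := x * ln x / (x - 1) - 1.
Definition lnm p x := ln ((exp (p * ln x) + 1)/2).
Definition lnA p x := if Req_EM_T p 0 then ln x / 2 else (1/p) * lnm p x.

Lemma powmean_eq p x : 0 < x -> powmean1 p x = exp (lnA p x).
Proof.
intros Hx. unfold powmean1, lnA. destruct (Req_EM_T p 0).
- rewrite <- Rpower_sqrt by auto. unfold Rpower. f_equal. field.
- unfold Rpower, lnm. reflexivity.
Qed.

Lemma ln2_pos : 0 < ln 2.
Proof. assert (H := ln2_gt). lra. Qed.

Lemma pow_eq p x : 0 < x -> powmean1_pow p x = exp (lnm p x / ln 2).
Proof.
intros Hx. assert (L := ln2_pos).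
unfold powmean1_pow. rewrite powmean_eq by auto. unfold Rpower. rewrite ln_exp. f_equal.
unfold lnA. destruct (Req_EM_T p 0).
- subst. unfold lnm. rewrite Rmult_0_l, exp_0. replace ((1+1)/2) with 1 by field. rewrite ln_1. field. lra.
- field. lra.
Qed.

Lemma ub_eq p x : 0 < x -> p <> 0 -> upper_bound1 p x = exp (-1 + (1/p) * ln (exp (p * ln x) + 1)).
Proof.
intros Hx Hp. unfold upper_bound1. rewrite powmean_eq by auto. unfold lnA.
destruct (Req_EM_T p 0); [contradiction|]. unfold Rpower, lnm.
rewrite <- !exp_plus. f_equal.
assert (0 < exp (p * ln x)) by apply exp_pos.
rewrite ln_div by lra. field. auto.
Qed.

Lemma lnm_anti x p q : 0 < x < 1 -> p < q -> lnm q x < lnm p x.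
Proof.
intros Hx Hpq. unfold lnm.
assert (ln x < 0). { rewrite <- ln_1. apply ln_increasing; lra. }
assert (exp (q * ln x) < exp (p * ln x)) by (apply exp_increasing; nra).
apply ln_increasing. assert (0 < exp (q * ln x)) by apply exp_pos. lra. lra.
Qed.

Lemma lnx_neg x : 0 < x < 1 -> ln x < 0.
Proof. intros. rewrite <- ln_1. apply ln_increasing; lra. Qed.

Lemma lnA_mono x p q : 0 < x < 1 -> p < q -> lnA p x < lnA q x.
Proof.
intros Hx Hpq. assert (La := lnx_neg x Hx).
unfold lnA, lnm.
destruct (Req_EM_T p 0) as [Hp|Hp]; destruct (Req_EM_T q 0) as [Hq|Hq].
- lra.
-
  assert (A := amgm (q * ln x)). assert (q * ln x <> 0) by (intro; nra).
  specialize (A H).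
  assert (ln x / 2 = (1/q) * (q * ln x / 2)) by (field; lra).
  rewrite H0. apply Rmult_lt_compat_l. apply Rdiv_lt_0_compat; lra. exact A.
-
  assert (A := amgm (p * ln x)). assert (p * ln x <> 0) by (intro; nra).
  specialize (A H).
  assert (ln x / 2 = (1/p) * (p * ln x / 2)) by (field; lra).
  rewrite H0. assert (1/p < 0). { unfold Rdiv. rewrite Rmult_1_l. apply Rinv_lt_0_compat. lra. }
  nra.
- destruct (Rlt_dec 0 p) as [Pp|Pp].
  +
    set (u := exp (p * ln x)).
    assert (Hu : 0 < u) by apply exp_pos.
    assert (Hu1 : u <> 1). { intro H. unfold u in H. assert (p * ln x = 0). { rewrite <- ln_1, <- H, ln_exp. auto. } nra. }
    assert (J := jensen (q/p) u). 
    assert (E : exp (q/p * ln u) = exp (q * ln x)). { unfold u. rewrite ln_exp. f_equal. field. lra. }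
    rewrite E in J.
    assert (Hr : 1 < q/p). { apply (Rmult_lt_reg_r p); [lra|]. unfold Rdiv. rewrite Rmult_assoc, Rinv_l by lra. lra. }
    specialize (J Hr Hu Hu1).
    assert (1/p * ln ((u+1)/2) = 1/q * (q/p * ln ((u+1)/2))) by (field; lra).
    rewrite H. apply Rmult_lt_compat_l. apply Rdiv_lt_0_compat; lra. exact J.
  + destruct (Rlt_dec q 0) as [Qn|Qn].
    *
      set (u := exp (q * ln x)).
      assert (Hu : 0 < u) by apply exp_pos.
      assert (Hu1 : u <> 1). { intro H. unfold u in H. assert (q * ln x = 0). { rewrite <- ln_1, <- H, ln_exp. auto. } nra. }
      assert (J := jensen (p/q) u).
      assert (E : exp (p/q * ln u) = exp (p * ln x)). { unfold u. rewrite ln_exp. f_equal. field. lra. }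
      rewrite E in J.
      assert (Hr : 1 < p/q). { apply (Rmult_lt_reg_r (-q)); [lra|]. unfold Rdiv. replace (p * / q * - q) with (- p) by (field; lra). lra. }
      specialize (J Hr Hu Hu1).
      assert (1/q * ln ((u+1)/2) = 1/p * (p/q * ln ((u+1)/2))) by (field; lra).
      rewrite H. assert (1/p < 0). { unfold Rdiv. rewrite Rmult_1_l. apply Rinv_lt_0_compat. lra. }
      nra.
    *
      assert (p < 0) by lra. assert (0 < q) by lra.
      assert (A1 := amgm (p * ln x) ltac:(intro; nra)).
      assert (A2 := amgm (q * ln x) ltac:(intro; nra)).
      assert (1/p < 0). { unfold Rdiv. rewrite Rmult_1_l. apply Rinv_lt_0_compat. lra. }
      assert (0 < 1/q). { apply Rdiv_lt_0_compat; lra. }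
      assert (1/p * (p * ln x / 2) = ln x / 2) by (field; lra).
      assert (1/q * (q * ln x / 2) = ln x / 2) by (field; lra).
      nra.
Qed.

Lemma cube_sub x : 0 < x < 1 -> exists s, 0 < s < 1 /\ s^3 = x /\ ln x = 3 * ln s /\ exp (2/3 * ln x) = s^2.
Proof.
intros Hx. assert (La := lnx_neg x Hx).
exists (exp (ln x / 3)). repeat split.
- apply exp_pos.
- rewrite <- exp_0. apply exp_increasing. lra.
- simpl. rewrite Rmult_1_r, <- !exp_plus. replace (ln x / 3 + (ln x / 3 + ln x / 3)) with (ln x) by field. apply exp_ln; lra.
- rewrite ln_exp. field.
- simpl. rewrite Rmult_1_r, <- !exp_plus. f_equal. field.
Qed.

Lemma coreA x : 0 < x < 1 -> lnA (2/3) x < lnI x.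
Proof.
intros Hx. destruct (cube_sub x Hx) as [s [Hs [E1 [E2 E3]]]].
unfold lnA, lnm, lnI. destruct (Req_EM_T (2/3) 0) as [e|_]; [lra|].
rewrite E3, E2. subst x.
assert (H := hA_neg s Hs). unfold hA in H.
replace (s^2 + 1) with (1 + s^2) by ring.
set (L := ln ((1 + s^2)/2)) in *.
set (Y := s^3 * (3 * ln s) / (s^3 - 1)).
assert (s3 : 0 < s^3 < 1). { split. apply pow_lt; lra. simpl. nra. }
assert (EY : Y * (s^3 - 1) = s^3 * (3 * ln s)) by (unfold Y; field; lra).
assert (H2 : s^3 * (3 * ln s - (1 - 1/s^3) * (1 + 3/2 * L)) < 0) by nra.
replace (s^3 * (3 * ln s - (1 - 1/s^3) * (1 + 3/2 * L))) with (s^3 * (3 * ln s) - (s^3 - 1) * (1 + 3/2*L)) in H2 by (field; lra).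
assert (1 + 3/2 * L < Y) by nra.
replace (1 / (2/3)) with (3/2) by field. lra.
Qed.

Lemma coreB x : 0 < x < 1 -> lnI x < lnm (2/3) x / ln 2.
Proof.
intros Hx. destruct (cube_sub x Hx) as [s [Hs [E1 [E2 E3]]]].
unfold lnm, lnI. rewrite E3, E2. subst x.
assert (H := hB_pos s Hs). unfold hB in H.
assert (L2 := ln2_pos).
replace (s^2 + 1) with (1 + s^2) by ring.
rewrite ln_div by (try lra; nra).
set (M := ln (1 + s^2)) in *.
set (Y := s^3 * (3 * ln s) / (s^3 - 1)).
assert (s3 : 0 < s^3 < 1). { split. apply pow_lt; lra. simpl. nra. }
assert (EY : Y * (s^3 - 1) = s^3 * (3 * ln s)) by (unfold Y; field; lra).
assert (H2 : 0 < s^3 * ((1/s^3 - 1) * M + 3 * ln 2 * ln s)) by nra.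
replace (s^3 * ((1/s^3 - 1) * M + 3 * ln 2 * ln s)) with ((1 - s^3) * M + ln 2 * (s^3 * (3 * ln s))) in H2 by (field; lra).
rewrite <- EY in H2.
assert (Y * ln 2 < M) by nra.
assert (Y < M / ln 2). { apply (Rmult_lt_reg_r (ln 2)); auto. unfold Rdiv. rewrite Rmult_assoc, Rinv_l by lra. lra. }
replace ((M - ln 2)/ln 2) with (M / ln 2 - 1) by (field; lra). lra.
Qed.

Lemma lnm1 x : 0 < x -> lnm 1 x = ln ((x+1)/2).
Proof. intros. unfold lnm. rewrite Rmult_1_l, exp_ln; auto. Qed.

Lemma lnA1 x : 0 < x -> lnA 1 x = ln ((x+1)/2).
Proof. intros. unfold lnA. destruct (Req_EM_T 1 0); [lra|]. rewrite lnm1 by auto. field. Qed.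

Lemma coreC x : 0 < x < 1 -> lnI x < ln ((x+1)/2).
Proof.
intros Hx. assert (H := kC_pos x Hx). unfold kC in H. unfold lnI.
replace (x + 1) with (1 + x) by ring.
set (N := ln ((1 + x)/2)) in *.
set (Y := x * ln x / (x - 1)).
assert (EY : Y * (x - 1) = x * ln x) by (unfold Y; field; lra).
assert (H2 : 0 < x * (ln x - (1 - 1/x) * (1 + N))) by nra.
replace (x * (ln x - (1 - 1/x) * (1 + N))) with (x * ln x - (x - 1) * (1 + N)) in H2 by (field; lra).
assert (Y < 1 + N) by nra. lra.
Qed.

Lemma coreD x : 0 < x < 1 -> ln ((x+1)/2) / ln 2 < lnI x.
Proof.
intros Hx. assert (H := kD_pos x Hx). unfold kD in H. unfold lnI.
assert (L2 := ln2_pos).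
replace (x + 1) with (1 + x) by ring.
rewrite ln_div by lra.
set (M := ln (1 + x)) in *.
set (Y := x * ln x / (x - 1)).
assert (EY : Y * (x - 1) = x * ln x) by (unfold Y; field; lra).
assert (H2 : 0 < x * (- ln 2 * ln x - (1 - x) * M / x)) by nra.
replace (x * (- ln 2 * ln x - (1 - x) * M / x)) with (- ln 2 * (x * ln x) - (1 - x) * M) in H2 by (field; lra).
rewrite <- EY in H2.
assert (M < Y * ln 2) by nra.
assert (M / ln 2 < Y). { apply (Rmult_lt_reg_r (ln 2)); auto. unfold Rdiv. rewrite Rmult_assoc, Rinv_l by lra. lra. }
replace ((M - ln 2)/ln 2) with (M / ln 2 - 1) by (field; lra). lra.
Qed.

Lemma FU x p : 0 < x < 1 -> 0 < p ->
  (p < ln 2 -> lnm p x / ln 2 < -1 + (1/p) * ln (exp (p * ln x) + 1)) /\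
  (ln 2 < p -> -1 + (1/p) * ln (exp (p * ln x) + 1) < lnm p x / ln 2).
Proof.
intros Hx Hp. assert (L2 := ln2_pos). unfold lnm.
assert (Hy : 0 < exp (p * ln x)) by apply exp_pos.
set (y := exp (p * ln x)) in *.
rewrite ln_div by lra.
assert (HN : 0 < ln (y + 1)). { rewrite <- ln_1. apply ln_increasing; lra. }
set (N := ln (y + 1)) in *.
replace ((N - ln 2) / ln 2) with (N * / ln 2 - 1) by (field; lra).
replace (1/p * N) with (N * / p) by (field; lra).
split; intros H.
- assert (/ ln 2 < / p) by (apply Rinv_lt_contravar; nra). nra.
- assert (/ p < / ln 2) by (apply Rinv_lt_contravar; nra). nra.
Qed.

Lemma lnI_gt x : 0 < x < 1 -> -1 < lnI x.
Proof.
intros Hx. assert (La := lnx_neg x Hx). unfold lnI.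
assert (0 < x * ln x / (x - 1)).
{ replace (x * ln x / (x - 1)) with (x * (- ln x) / (1 - x)) by (field; lra).
  apply Rdiv_lt_0_compat; nra. }
lra.
Qed.

Lemma identric_eq x : identric1 x = exp (lnI x).
Proof. reflexivity. Qed.

Lemma div_le a b : a <= b -> a / ln 2 <= b / ln 2.
Proof. intros. assert (L := ln2_pos). unfold Rdiv. apply Rmult_le_compat_r; auto. left. apply Rinv_0_lt_compat. auto. Qed.
Lemma div_lt a b : a < b -> a / ln 2 < b / ln 2.
Proof. intros. assert (L := ln2_pos). unfold Rdiv. apply Rmult_lt_compat_r; auto. apply Rinv_0_lt_compat. auto. Qed.

Lemma chain1 p x : 0 < p <= 2 / 3 -> 0 < x < 1 ->
     powmean1 p x < identric1 x /\
     identric1 x < powmean1_pow p x /\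
     powmean1_pow p x < upper_bound1 p x.
Proof.
intros Hp Hx.
rewrite powmean_eq, identric_eq, pow_eq, ub_eq by lra.
assert (G := ln2_gt).
split; [|split]; apply exp_increasing.
- destruct (Req_dec p (2/3)) as [e|ne].
  + subst. apply coreA; auto.
  + assert (lnA p x < lnA (2/3) x) by (apply lnA_mono; lra).
    assert (HA := coreA x Hx). lra.
- destruct (Req_dec p (2/3)) as [e|ne].
  + subst. apply coreB; auto.
  + assert (lnm (2/3) x < lnm p x) by (apply lnm_anti; lra).
    assert (HB := coreB x Hx). apply div_lt in H. lra.
- apply (FU x p Hx (proj1 Hp)). lra.
Qed.

Lemma chain2 p x : 1 <= p -> 0 < x < 1 ->
     powmean1 p x > identric1 x /\
     identric1 x > powmean1_pow p x /\
     powmean1_pow p x > upper_bound1 p x.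
Proof.
intros Hp Hx. unfold Rgt.
rewrite powmean_eq, identric_eq, pow_eq, ub_eq by lra.
assert (G := ln2_lt1).
split; [|split]; apply exp_increasing.
- assert (lnA 1 x <= lnA p x).
  { destruct (Req_dec p 1) as [e|ne]. subst; lra. left. apply lnA_mono; lra. }
  rewrite lnA1 in H by lra. assert (H2 := coreC x Hx). lra.
- assert (lnm p x <= lnm 1 x).
  { destruct (Req_dec p 1) as [e|ne]. subst; lra. left. apply lnm_anti; lra. }
  apply div_le in H. rewrite lnm1 in H by lra. assert (H2 := coreD x Hx). lra.
- apply (FU x p Hx ltac:(lra)). lra.
Qed.

Lemma mono x : 0 < x < 1 ->
     (forall p q : R, p < q -> powmean1 p x < powmean1 q x) /\
     (forall p q : R, p < q -> powmean1_pow q x < powmean1_pow p x) /\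
     (forall p q : R, 0 < p -> p < q -> upper_bound1 q x < upper_bound1 p x).
Proof.
intros Hx. split; [|split]; intros p q.
- intros H. rewrite !powmean_eq by lra. apply exp_increasing. apply lnA_mono; auto.
- intros H. rewrite !pow_eq by lra. apply exp_increasing. apply div_lt. apply lnm_anti; auto.
- intros Hp H. rewrite !ub_eq by lra. apply exp_increasing.
  assert (La := lnx_neg x Hx).
  set (u := exp (p * ln x)).
  assert (Hu : 0 < u < 1). { split. apply exp_pos. unfold u. rewrite <- exp_0. apply exp_increasing. nra. }
  assert (Hr : 1 < q/p). { apply (Rmult_lt_reg_r p); [lra|]. unfold Rdiv. rewrite Rmult_assoc, Rinv_l by lra. lra. }
  assert (S := superadd (q/p) u Hr Hu).
  assert (E : exp (q/p * ln u) = exp (q * ln x)). { unfold u. rewrite ln_exp. f_equal. field. lra. }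
  rewrite E in S.
  assert (S2 : ln (exp (q * ln x) + 1) < q/p * ln (1 + u)).
  { rewrite <- (ln_exp (q/p * ln (1+u))). apply ln_increasing; auto.
    assert (0 < exp (q * ln x)) by apply exp_pos. lra. }
  replace (u + 1) with (1 + u) by ring.
  assert (1/q * ln (exp (q * ln x) + 1) < 1/q * (q/p * ln (1 + u))).
  { apply Rmult_lt_compat_l; auto. apply Rdiv_lt_0_compat; lra. }
  replace (1/q * (q/p * ln (1+u))) with (1/p * ln (1+u)) in H0 by (field; lra).
  lra.
Qed.

Lemma best_c p : 0 < p <= 2/3 ->
  forall c : R, (forall x, 0 < x < 1 -> c * powmean1 p x <= identric1 x) -> c <= 1.
Proof.
intros Hp c Hc. destruct (Rle_lt_dec c 1) as [ok|bad]; auto. exfalso.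
set (w := (1 + 1/c)/2).
assert (Hic : 0 < 1/c < 1). { split. apply Rdiv_lt_0_compat; lra. apply (Rmult_lt_reg_r c); [lra|]. unfold Rdiv. rewrite Rmult_assoc, Rinv_l by lra. lra. }
assert (Hw : 1/2 < w < 1) by (unfold w; lra).
set (x := w^2).
assert (Hx : 0 < x < 1) by (unfold x; simpl; nra).
assert (Sq : powmean1 0 x = w).
{ unfold powmean1. destruct (Req_EM_T 0 0); [|lra]. unfold x. apply sqrt_pow2. lra. }
assert (M := proj1 (mono x Hx) 0 p (proj1 Hp)). rewrite Sq in M.
assert (I1 : identric1 x < 1).
{ rewrite identric_eq, <- exp_0. apply exp_increasing.
  assert (H := coreC x Hx). assert (ln ((x+1)/2) < 0). { rewrite <- ln_1. apply ln_increasing; lra. } lra. }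
assert (H := Hc x Hx).
assert (c * w < c * powmean1 p x) by (apply Rmult_lt_compat_l; lra).
assert (c * w = (c + 1)/2) by (unfold w; field; lra).
lra.
Qed.

Lemma best_C p : 0 < p <= 2/3 ->
  forall C : R, (forall x, 0 < x < 1 -> identric1 x <= C * powmean1 p x) ->
        exp (-1) * Rpower 2 (1 / p) <= C.
Proof.
intros Hp C HC. destruct (Rle_lt_dec (exp (-1) * Rpower 2 (1/p)) C) as [ok|bad]; auto. exfalso.
assert (HCp : 0 < C).
{ assert (H := HC (1/2) ltac:(lra)). rewrite identric_eq, powmean_eq in H by lra.
  assert (0 < exp (lnI (1/2))) by apply exp_pos. assert (0 < exp (lnA p (1/2))) by apply exp_pos.
  destruct (Rle_lt_dec C 0); [|auto]. nra. }
assert (K : exp (-1) * Rpower 2 (1/p) = exp (-1 + 1/p * ln 2)) by (unfold Rpower; rewrite exp_plus; auto).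
rewrite K in bad.
assert (lC : ln C < -1 + 1/p * ln 2).
{ rewrite <- (ln_exp (-1 + 1/p * ln 2)). apply ln_increasing; auto. }
set (b := p * (-1 - ln C) + ln 2).
assert (Hb : 0 < b).
{ unfold b. assert (p * ln C < p * (-1 + 1/p * ln 2)) by (apply Rmult_lt_compat_l; lra).
  replace (p * (-1 + 1/p * ln 2)) with (- p + ln 2) in H by (field; lra). lra. }
set (y := Rmin (1/2) (b/2)).
assert (Hy : 0 < y) by (apply Rmin_pos; lra).
assert (Hy1 : y <= 1/2) by apply Rmin_l.
assert (Hyb : y <= b/2) by apply Rmin_r.
set (x := exp (1/p * ln y)).
assert (lny : ln y < 0) by (apply lnx_neg; lra).
assert (Hx : 0 < x < 1).
{ assert (0 < 1/p) by (apply Rdiv_lt_0_compat; lra).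
  assert (1/p * ln y < 1/p * 0) by (apply Rmult_lt_compat_l; assumption).
  assert (exp (1/p * ln y) < exp 0) by (apply exp_increasing; rewrite Rmult_0_r in H0; exact H0). rewrite exp_0 in H1. split. apply exp_pos. exact H1. }
assert (Ex : exp (p * ln x) = y).
{ unfold x. rewrite ln_exp. replace (p * (1/p * ln y)) with (ln y) by (field; lra). apply exp_ln; auto. }
assert (H := HC x Hx).
rewrite identric_eq, powmean_eq in H by lra.
unfold lnA in H. destruct (Req_EM_T p 0) as [e|_]; [lra|]. unfold lnm in H. rewrite Ex in H.
assert (G := lnI_gt x Hx).
assert (l1 : ln (1 + y) < y).
{ rewrite <- (ln_exp y) at 2. apply ln_increasing. lra. apply exp_ineq1. lra. }
rewrite ln_div in H by lra.
replace (y + 1) with (1 + y) in H by ring.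
assert (T : ln C + 1/p * (ln (1 + y) - ln 2) < -1).
{ assert (1/p * (ln (1+y) - ln 2) < 1/p * (b - ln 2)).
  { apply Rmult_lt_compat_l. apply Rdiv_lt_0_compat; lra. lra. }
  replace (1/p * (b - ln 2)) with (-1 - ln C) in H0 by (unfold b; field; lra). lra. }
assert (E2 : C * exp (1/p * (ln (1+y) - ln 2)) = exp (ln C + 1/p * (ln (1+y) - ln 2)))
  by (rewrite exp_plus, exp_ln; auto).
rewrite E2 in H.
assert (exp (ln C + 1/p * (ln (1+y) - ln 2)) < exp (-1)) by (apply exp_increasing; auto).
assert (exp (-1) < exp (lnI x)) by (apply exp_increasing; auto).
lra.
Qed.

Theorem mainTheorem10 :
  (* chain of inequalities for p in (0, 2/3] *)
  (forall p x : R, 0 < p <= 2 / 3 -> 0 < x < 1 ->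
     powmean1 p x < identric1 x /\
     identric1 x < powmean1_pow p x /\
     powmean1_pow p x < upper_bound1 p x) /\
  (* best constants for p in (0, 2/3] *)
  (forall p : R, 0 < p <= 2 / 3 ->
     (forall x, 0 < x < 1 -> 1 * powmean1 p x <= identric1 x) /\
     (forall c : R, (forall x, 0 < x < 1 -> c * powmean1 p x <= identric1 x) -> c <= 1) /\
     (forall x, 0 < x < 1 ->
        identric1 x <= exp (-1) * Rpower 2 (1 / p) * powmean1 p x) /\
     (forall C : R, (forall x, 0 < x < 1 -> identric1 x <= C * powmean1 p x) ->
        exp (-1) * Rpower 2 (1 / p) <= C)) /\
  (* reversed chain for p >= 1 *)
  (forall p x : R, 1 <= p -> 0 < x < 1 ->
     powmean1 p x > identric1 x /\
     identric1 x > powmean1_pow p x /\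
     powmean1_pow p x > upper_bound1 p x) /\
  (* monotonicity in p for fixed x in (0,1) *)
  (forall x : R, 0 < x < 1 ->
     (forall p q : R, p < q -> powmean1 p x < powmean1 q x) /\
     (forall p q : R, p < q -> powmean1_pow q x < powmean1_pow p x) /\
     (forall p q : R, 0 < p -> p < q -> upper_bound1 q x < upper_bound1 p x)).
Proof.
split; [exact chain1|]. split; [|split; [exact chain2|exact mono]].
intros p Hp. split; [|split; [exact (best_c p Hp)|split; [|exact (best_C p Hp)]]].
- intros x Hx. rewrite Rmult_1_l. left. apply (chain1 p x Hp Hx).
- intros x Hx. change (identric1 x <= upper_bound1 p x).
  destruct (chain1 p x Hp Hx) as [_ [H1 H2]]. lra.
Qed.
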